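(* Let $\mathbf M=(M_p)_{p\in\mathbb N_0}$ and $\mathbf N=(N_p)_{p\in\mathbb N_0}$ be sequences of positive reals with $M_0=N_0=1$ satisfying $M_p^2\le M_{p-1}M_{p+1}$ and $N_p^2\le N_{p-1}N_{p+1}$ for all $p\in\mathbb N$. Then the following are equivalent: (i) there exists $A\ge1$ such that $M_{p+1}\le A^{p+1}N_p$ for all $p\in\mathbb N_0$; (ii) there exist $A\ge1$ and $B>0$ such that $\omega_{\mathbf N}(t)+\log t\le\omega_{\mathbf M}(At)+B$ for all $t>0$.
   Context: For a sequence $\mathbf M=(M_p)_{p\in\mathbb N_0}$ with $M_0=1$, the associated function is $\omega_{\mathbf M}(t)=\sup_{p\in\mathbb N_0}\log\frac{|t|^p}{M_p}$, $t\in\mathbb R$ (with $0^0=1$). *)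

(* Defs.v *)
From Stdlib Require Import Reals.
From Coquelicot Require Import Coquelicot.
Open Scope R_scope.

(* Associated function omega_M(t) = sup_{p} log(|t|^p / M_p), with 0^0 = 1,
   valued in the extended reals (log 0 = -oo). *)
Definition omega_term (M : nat -> R) (t : R) (p : nat) : Rbar :=
  if Req_EM_T (Rabs t ^ p) 0 then m_infty
  else Finite (ln (Rabs t ^ p / M p)).

Definition omega (M : nat -> R) (t : R) : Rbar :=
  Sup_seq (omega_term M t).

Definition lc_seq (M : nat -> R) : Prop :=
  (forall p, 0 < M p) /\ M 0%nat = 1 /\
  (forall p : nat, (1 <= p)%nat -> M p ^ 2 <= M (p - 1)%nat * M (p + 1)%nat).

(* Main.v *)
Require Import Defs.
From Stdlib Require Import Reals Lra Lia.
From Coquelicot Require Import Coquelicot.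
Open Scope R_scope.

Lemma sup_lub (u : nat -> Rbar) (x : R) :
  (forall n, Rbar_le (u n) x) -> Rbar_le (Sup_seq u) x.
Proof.
  intro H. apply Rbar_not_lt_le; intro H'.
  apply Sup_seq_minor_lt in H'. destruct H' as [n Hn].
  apply Rbar_lt_not_le in Hn. apply Hn, H.
Qed.

Lemma omega_term_pos M t p : 0 < t ->
  omega_term M t p = Finite (ln (t ^ p / M p)).
Proof.
  intro Ht. unfold omega_term. rewrite (Rabs_pos_eq t) by lra.
  destruct (Req_EM_T (t ^ p) 0) as [e|e]; [|reflexivity].
  exfalso. pose proof (pow_lt t p Ht). lra.
Qed.

Lemma lc_step M : lc_seq M -> forall q, M (S q) ^ 2 <= M q * M (S (S q)).
Proof.
  intros [Hp [H0 Hl]] q. specialize (Hl (S q) ltac:(lia)).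
  replace (S q - 1)%nat with q in Hl by lia.
  replace (S q + 1)%nat with (S (S q)) in Hl by lia. exact Hl.
Qed.

Lemma ratio_step M : lc_seq M -> forall q,
  M (S q) / M q <= M (S (S q)) / M (S q).
Proof.
  intros HM q. pose proof (lc_step M HM q) as H.
  destruct HM as [Hp _].
  pose proof (Hp q). pose proof (Hp (S q)). pose proof (Hp (S (S q))).
  apply Rmult_le_reg_r with (M q * M (S q)); [nra|].
  replace (M (S q) / M q * (M q * M (S q))) with (M (S q) ^ 2) by (field; lra).
  replace (M (S (S q)) / M (S q) * (M q * M (S q))) with (M q * M (S (S q))) by (field; lra).
  exact H.
Qed.

Lemma ratio_mono M : lc_seq M -> forall a d,
  M (S a) / M a <= M (S (a + d)) / M (a + d)%nat.
Proof.
  intros HM a d. induction d.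
  - rewrite Nat.add_0_r. lra.
  - eapply Rle_trans; [apply IHd|].
    replace (a + S d)%nat with (S (a + d)) by lia. apply ratio_step; auto.
Qed.

Lemma ratio_le M : lc_seq M -> forall a b, (a <= b)%nat ->
  M (S a) / M a <= M (S b) / M b.
Proof.
  intros HM a b Hab. replace b with (a + (b - a))%nat by lia.
  apply ratio_mono; auto.
Qed.

Lemma f_step_down M t q : lc_seq M -> 0 < t -> M (S q) / M q <= t ->
  M (S q) / t ^ S q <= M q / t ^ q.
Proof.
  intros HM Ht H. destruct HM as [Hp _].
  pose proof (Hp q). pose proof (Hp (S q)). pose proof (pow_lt t q Ht).
  simpl. 
  apply Rmult_le_reg_r with (t * t ^ q * M q); [apply Rmult_lt_0_compat; nra|].
  replace (M (S q) / (t * t ^ q) * (t * t ^ q * M q)) with (M (S q) * M q) by (field; lra).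
  replace (M q / t ^ q * (t * t ^ q * M q)) with ((t * M q) * M q) by (field; lra).
  apply Rmult_le_compat_r; [lra|].
  apply Rmult_le_reg_r with (/ M q); [apply Rinv_0_lt_compat; lra|].
  replace (t * M q * / M q) with t by (field; lra). exact H.
Qed.

Lemma f_step_up M t q : lc_seq M -> 0 < t -> t <= M (S q) / M q ->
  M q / t ^ q <= M (S q) / t ^ S q.
Proof.
  intros HM Ht H. destruct HM as [Hp _].
  pose proof (Hp q). pose proof (Hp (S q)). pose proof (pow_lt t q Ht).
  simpl.
  apply Rmult_le_reg_r with (t * t ^ q * M q); [apply Rmult_lt_0_compat; nra|].
  replace (M (S q) / (t * t ^ q) * (t * t ^ q * M q)) with (M (S q) * M q) by (field; lra).
  replace (M q / t ^ q * (t * t ^ q * M q)) with ((t * M q) * M q) by (field; lra).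
  apply Rmult_le_compat_r; [lra|].
  apply Rmult_le_reg_r with (/ M q); [apply Rinv_0_lt_compat; lra|].
  replace (t * M q * / M q) with t by (field; lra). 
  replace (M (S q) * / M q) with (M (S q) / M q) by reflexivity. exact H.
Qed.

Lemma f_min M p : lc_seq M -> forall q,
  let t := M (S p) / M p in
  M (S p) / t ^ S p <= M q / t ^ q.
Proof.
  intros HM q t.
  assert (Ht : 0 < t).
  { destruct HM as [Hp _]. unfold t. pose proof (Hp p); pose proof (Hp (S p)).
    apply Rdiv_lt_0_compat; lra. }
  destruct (Compare_dec.le_lt_dec q (S p)) as [Hq|Hq].
  - assert (forall d q, (S p = q + d)%nat -> M (S p) / t ^ S p <= M q / t ^ q) as K.
    { induction d; intros q0 E.
      - rewrite E, Nat.add_0_r. lra.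
      - eapply Rle_trans; [apply (IHd (S q0)); lia|].
        apply f_step_down; auto. unfold t. apply ratio_le; auto. lia. }
    apply (K (S p - q)%nat). lia.
  - assert (forall d, M (S p) / t ^ S p <= M (S p + d)%nat / t ^ (S p + d)) as K.
    { induction d.
      - rewrite Nat.add_0_r. lra.
      - eapply Rle_trans; [apply IHd|].
        replace (S p + S d)%nat with (S (S p + d)) by lia.
        apply f_step_up; auto. unfold t. apply ratio_le; auto. lia. }
    replace q with (S p + (q - S p))%nat by lia. apply K.
Qed.

Lemma omega_at_ratio M p : lc_seq M ->
  let t := M (S p) / M p in
  Rbar_le (omega M t) (Finite (ln (t ^ S p / M (S p)))).
Proof.
  intros HM t.
  assert (Ht : 0 < t).
  { destruct HM as [Hp _]. unfold t. pose proof (Hp p); pose proof (Hp (S p)).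
    apply Rdiv_lt_0_compat; lra. }
  unfold omega. apply sup_lub. intro q. rewrite omega_term_pos by exact Ht.
  simpl. destruct HM as [Hp X]. pose proof (Hp q); pose proof (Hp (S p)).
  pose proof (pow_lt t q Ht). pose proof (pow_lt t (S p) Ht).
  apply ln_le. apply Rdiv_lt_0_compat; lra.
  pose proof (f_min M p (conj Hp X) q) as F. simpl in F. fold t in F.
  change (t * t ^ p) with (t ^ S p) in F.
  apply Rmult_le_reg_r with (M q * M (S p) / (t ^ q * t ^ S p)).
  { apply Rdiv_lt_0_compat; apply Rmult_lt_0_compat; lra. }
  replace (t ^ q / M q * (M q * M (S p) / (t ^ q * t ^ S p))) with (M (S p) / t ^ S p) by (field; lra).
  replace (t * t ^ p / M (S p) * (M q * M (S p) / (t ^ q * t ^ S p))) with (M q / t ^ q) by (change (t * t ^ p) with (t ^ S p); field; lra).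
  exact F.
Qed.

Theorem lemma2p2 (M N : nat -> R) :
  lc_seq M -> lc_seq N ->
  ((exists A : R, 1 <= A /\
      forall p : nat, M (S p) <= A ^ (S p) * N p)
   <->
   (exists A B : R, 1 <= A /\ 0 < B /\
      forall t : R, 0 < t ->
        Rbar_le (Rbar_plus (omega N t) (Finite (ln t)))
                (Rbar_plus (omega M (A * t)) (Finite B)))).
Proof.
  intros HM HN. split.
  - intros [A [HA H]]. exists A, 1. split; [lra|split;[lra|]].
    intros t Ht.
    assert (HAt : 0 < A * t) by nra.
    assert (Hterm : forall p, Rbar_le (Finite (ln (t ^ p / N p) + ln t)) (omega M (A * t))).
    { intro p. unfold omega. apply Sup_seq_minor_le with (n := S p).
      rewrite omega_term_pos by exact HAt. simpl.
      destruct HM as [HpM _]; destruct HN as [HpN _].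
      pose proof (HpM (S p)); pose proof (HpN p). pose proof (pow_lt t p Ht).
      pose proof (pow_lt A (S p) ltac:(lra)).
      rewrite <- ln_mult by (try apply Rdiv_lt_0_compat; lra).
      apply ln_le. apply Rmult_lt_0_compat; [apply Rdiv_lt_0_compat|]; lra.
      rewrite Rpow_mult_distr.
      specialize (H p). simpl in *.
      apply Rmult_le_reg_r with (N p * M (S p)); [nra|].
      replace (t ^ p / N p * t * (N p * M (S p))) with ((t * t ^ p) * M (S p)) by (field; lra).
      replace (A * t * (A ^ p * t ^ p) / M (S p) * (N p * M (S p))) with ((t * t ^ p) * (A * A ^ p * N p)) by (field; lra).
      apply Rmult_le_compat_l; nra. }
    apply Rbar_le_trans with (omega M (A * t)).
    + destruct (omega M (A * t)) as [s| |] eqn:E.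
      * assert (Rbar_le (omega N t) (Finite (s - ln t))).
        { unfold omega at 1. apply sup_lub. intro p. rewrite omega_term_pos by exact Ht.
          specialize (Hterm p). simpl in *. lra. }
        destruct (omega N t); simpl in *; lra.
      * destruct (Rbar_plus (omega N t) (Finite (ln t))); simpl; auto.
      * specialize (Hterm 0%nat). simpl in Hterm. contradiction.
    + destruct (omega M (A * t)); simpl; auto; lra.
  - intros [A [B [HA [HB H]]]]. exists (exp B * A).
    assert (HeB : 1 <= exp B) by (pose proof (exp_ineq1_le B); lra).
    split; [nra|]. intro p.
    pose proof (omega_at_ratio M p HM) as Hom. simpl in Hom.
    set (t := M (S p) / M p) in *.
    destruct HM as [HpM X]; destruct HN as [HpN Y].
    pose proof (HpM p); pose proof (HpM (S p)); pose proof (HpN p).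
    assert (Ht : 0 < t) by (apply Rdiv_lt_0_compat; lra).
    set (s := t / A).
    assert (Hs : 0 < s) by (apply Rdiv_lt_0_compat; lra).
    specialize (H s Hs).
    replace (A * s) with t in H by (unfold s; field; lra).
    assert (Hlow : Rbar_le (Finite (ln (s ^ p / N p))) (omega N s)).
    { unfold omega. apply Sup_seq_minor_le with (n := p). rewrite omega_term_pos by exact Hs.
      simpl. lra. }
    assert (Hc : Rbar_le (Finite (ln (s ^ p / N p) + ln s)) (Finite (ln (t * t ^ p / M (S p)) + B))).
    { eapply Rbar_le_trans.
      2: eapply Rbar_le_trans; [exact H|].
      - change (Finite (ln (s ^ p / N p) + ln s)) with (Rbar_plus (Finite (ln (s ^ p / N p))) (Finite (ln s))).
        apply Rbar_plus_le_compat; [exact Hlow| simpl; lra].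
      - change (Finite (ln (t * t ^ p / M (S p)) + B)) with (Rbar_plus (Finite (ln (t * t ^ p / M (S p)))) (Finite B)).
        apply Rbar_plus_le_compat; [exact Hom| simpl; lra]. }
    simpl in Hc.
    pose proof (pow_lt s p Hs). pose proof (pow_lt t p Ht).
    rewrite <- ln_mult in Hc by (try apply Rdiv_lt_0_compat; lra).
    assert (Hr : s ^ p / N p * s <= t * t ^ p / M (S p) * exp B).
    { apply Rnot_lt_le. intro Hlt. apply ln_increasing in Hlt.
      2: { apply Rmult_lt_0_compat; [apply Rdiv_lt_0_compat; nra| apply exp_pos]. }
      rewrite ln_mult, ln_exp in Hlt by (try apply Rdiv_lt_0_compat; try apply exp_pos; nra).
      lra. }
    assert (Hts : t = A * s) by (unfold s; field; lra).
    rewrite Hts in Hr.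
    assert (Hpow : exp B <= exp B ^ S p).
    { simpl. pose proof (pow_le_one_compat_r := pow_R1_Rle (exp B) p HeB). nra. }
    rewrite Rpow_mult_distr.
    assert (HAp : 0 < A ^ S p) by (apply pow_lt; lra).
    assert (M (S p) <= exp B * A ^ S p * N p).
    { rewrite Rpow_mult_distr in Hr. simpl in Hr. simpl.
      apply Rmult_le_reg_r with (s * s ^ p / (N p * M (S p))).
      { apply Rdiv_lt_0_compat; nra. }
      replace (M (S p) * (s * s ^ p / (N p * M (S p)))) with (s ^ p / N p * s) by (field; lra).
      replace (exp B * (A * A ^ p) * N p * (s * s ^ p / (N p * M (S p)))) with (A * A ^ p * (s * s ^ p) / M (S p) * exp B) by (field; lra).
      eapply Rle_trans; [exact Hr|]; right; field; lra. }
    nra.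
Qed.
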